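(* Let $\mathcal{H}_A,\mathcal{H}_B,\mathcal{H}_C$ be finite-dimensional Hilbert spaces with fixed reference bases of $\mathcal{H}_A$ and $\mathcal{H}_B$ (and the product basis on $\mathcal{H}_A\otimes\mathcal{H}_B$). For every state $\rho_{ABC}$ on $\mathcal{H}_A\otimes\mathcal{H}_B\otimes\mathcal{H}_C$ with reduced states $\rho_{AC},\rho_{BC}$, $$C^{AB|C}_f(\rho_{ABC})\geq C^{A|BC}_f(\rho_{ABC})+C^{B|C}_f(\rho_{BC}),$$ and consequently $$C^{AB|C}_f(\rho_{ABC})\geq C^{A|C}_f(\rho_{AC})+C^{B|C}_f(\rho_{BC}).$$
   Context: $S$ is the von Neumann entropy. For a bipartite split $X|Y$ where $X$ has a fixed reference basis $\{|k\rangle_X\}$, $\Delta_X(\rho)=\sum_k(|k\rangle\langle k|_X\otimes I_Y)\rho(|k\rangle\langle k|_X\otimes I_Y)$. The IQ coherence of formation is $C^{X|Y}_f(\rho_{XY})=\min\sum_ip_iS(\Delta_X(|\psi_i\rangle\langle\psi_i|_{XY}))$, minimized over all pure-state decompositions $\rho_{XY}=\sum_ip_i|\psi_i\rangle\langle\psi_i|_{XY}$. *)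

(* Defs.v *)
From HB Require Import structures.
From mathcomp Require Import all_boot all_order all_algebra.
From mathcomp Require Import all_classical all_reals.
From mathcomp Require Import exp.
From mathcomp Require Import complex.

Set Implicit Arguments.
Unset Strict Implicit.
Unset Printing Implicit Defensive.

Import Order.TTheory GRing.Theory Num.Theory.
Local Open Scope ring_scope.
Local Open Scope classical_set_scope.
Local Open Scope sesquilinear_scope.
Local Open Scope complex_scope.

(* A finite-dimensional Hilbert space with a
   fixed reference (computational) basis is modelled by a finite index type T:
   the space is C^T, the reference basis is the standard basis {|t>, t : T}.
   Operators on C^T are square matrices of size #|T| (rows/columns indexed
   through enum_rank / enum_val).  A composite system X (x) Y is indexed by
   the product type X * Y, whose product basis is |x>|y>. *)

Section QI.
Variable R : realType.
Local Notation CC := (R[i]).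

Definition sqmx (T : finType) := 'M[CC]_#|T|.
Definition cvec (T : finType) := 'cV[CC]_#|T|.

Definition ent (T : finType) (A : sqmx T) (x y : T) : CC :=
  A (enum_rank x) (enum_rank y).
Definition mkmx (T : finType) (f : T -> T -> CC) : sqmx T :=
  \matrix_(i, j) f (enum_val i) (enum_val j).

Definition psdmx n (M : 'M[CC]_n) : Prop :=
  M ^t* = M /\ forall v : 'cV[CC]_n, 0 <= (v ^t* *m M *m v) 0 0.

Definition density n (M : 'M[CC]_n) : Prop := psdmx M /\ \tr M = 1.

(* eigenvalues, with algebraic multiplicity: the roots of the characteristic
   polynomial *)
Definition eigvals n (M : 'M[CC]_n) : seq CC :=
  sval (closed_field_poly_normal (char_poly M)).

Definition xlnx (t : R) : R := if t == 0 then 0 else t * ln t.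

(* von Neumann entropy S(M) = - Tr (M ln M) = - sum_lambda lambda ln lambda *)
Definition vN_entropy n (M : 'M[CC]_n) : R :=
  - \sum_(l <- eigvals M) xlnx (complex.Re l).

Definition dephase (X Y : finType) (M : sqmx (X * Y)%type) : sqmx (X * Y)%type :=
  mkmx (fun u v => if u.1 == v.1 then ent M u v else 0).

Definition ketbra n (psi : 'cV[CC]_n) : 'M[CC]_n := psi *m psi ^t*.

Definition pure_decomp n (rho : 'M[CC]_n) (k : nat)
    (p : 'I_k -> R) (psi : 'I_k -> 'cV[CC]_n) : Prop :=
  [/\ forall i, 0 <= p i,
      \sum_i p i = 1,
      forall i, (psi i) ^t* *m psi i = 1%:M
    & rho = \sum_i (p i)%:C *: ketbra (psi i)].

Definition coh_form (X Y : finType) (rho : sqmx (X * Y)%type) : R :=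
  inf [set s : R | exists (k : nat) (p : 'I_k -> R)
                          (psi : 'I_k -> cvec (X * Y)%type),
         pure_decomp rho p psi /\
         s = \sum_i p i * vN_entropy (dephase (ketbra (psi i)))].

Variables (A B C : finType).

(* regrouping (A B) C  ~>  A (B C): the same operator, viewed for the
   bipartition A | BC *)
Definition regroup (rho : sqmx ((A * B) * C)%type) : sqmx (A * (B * C))%type :=
  mkmx (fun u v => ent rho ((u.1, u.2.1), u.2.2) ((v.1, v.2.1), v.2.2)).

Definition ptrace_A (rho : sqmx ((A * B) * C)%type) : sqmx (B * C)%type :=
  mkmx (fun u v => \sum_(a : A) ent rho ((a, u.1), u.2) ((a, v.1), v.2)).
Definition ptrace_B (rho : sqmx ((A * B) * C)%type) : sqmx (A * C)%type :=
  mkmx (fun u v => \sum_(b : B) ent rho ((u.1, b), u.2) ((v.1, b), v.2)).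

End QI.

(* Main.v *)
Require Import Defs.
From HB Require Import structures.
From mathcomp Require Import all_boot all_order all_algebra.
From mathcomp Require Import all_classical all_reals.
From mathcomp Require Import exp.
From mathcomp Require Import complex.
From mathcomp Require Import ring lra.

Import Order.TTheory GRing.Theory Num.Theory.
Local Open Scope ring_scope.

Module Helpers.
Set Implicit Arguments.
Unset Strict Implicit.
Unset Printing Implicit Defensive.
Local Open Scope classical_set_scope.
Local Open Scope complex_scope.
Local Open Scope sesquilinear_scope.

Lemma sylvester (F : comNzRingType) n m (W : 'M[F]_(n,m)) (V : 'M[F]_(m,n)) :
  'X^m * char_poly (W *m V) = 'X^n * char_poly (V *m W).
Proof.
pose Wp := map_mx polyC W; pose Vp := map_mx polyC V.
pose M := block_mx ('X%:M : 'M_n) Wp Vp (1%:M : 'M_m).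
have e1 : M = block_mx 1%:M Wp 0 1%:M *m block_mx ('X%:M - Wp *m Vp) 0 Vp 1%:M.
  rewrite mulmx_block ?mul1mx ?mul0mx ?mulmx0 ?mulmx1 ?addr0 ?add0r.
  by rewrite subrK.
have e2 : M *m block_mx 1%:M (- Wp) 0 ('X%:M) =
          block_mx ('X%:M) 0 Vp ('X%:M - Vp *m Wp).
  rewrite mulmx_block ?mulmx1 ?mulmx0 ?addr0 ?mul1mx mulmxN mul_scalar_mx mul_mx_scalar.
  by rewrite addNr mulmxN [- _ + _]addrC.
have dM : \det M = char_poly (W *m V).
  rewrite e1 det_mulmx det_ublock det_lblock !det1 !mul1r mulr1.
  by rewrite /char_poly /char_poly_mx map_mxM.
have := congr1 determinant e2.
rewrite det_mulmx dM det_ublock det_lblock !det_scalar expr1n mul1r => h.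
by rewrite mulrC h /char_poly /char_poly_mx map_mxM.
Qed.

Section Basics.
Variable R : realType.
Local Notation CC := (R[i]).

Definition sq (z : CC) : R := (complex.Re z) ^+ 2 + (complex.Im z) ^+ 2.
Lemma conjM_sq (z : CC) : Num.conj z * z = (sq z)%:C.
Proof. case: z => a b. rewrite /sq /=. simpc. apply/eqP; rewrite eq_complex /=; apply/andP; split; apply/eqP; ring. Qed.
Lemma sq_ge0 z : 0 <= sq z.
Proof. by rewrite /sq addr_ge0 // sqr_ge0. Qed.
Lemma sq_eq0 z : sq z = 0 -> z = 0.
Proof.
case: z => a b; rewrite /sq /= => h.
have ha : a ^+ 2 = 0 by apply/eqP; rewrite eq_le sqr_ge0 andbT -h lerDl sqr_ge0.
have hb : b ^+ 2 = 0 by move: h; rewrite ha add0r.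
by move/eqP: ha; rewrite sqrf_eq0 => /eqP ->; move/eqP: hb; rewrite sqrf_eq0 => /eqP ->.
Qed.
Lemma ge0_C (z : CC) : 0 <= z -> z = (complex.Re z)%:C.
Proof. case: z => a b; rewrite lecE /= => /andP[/eqP -> _]; exact: complexr0. Qed.
Lemma conjC_R (x : R) : Num.conj (x%:C : CC) = x%:C.
Proof. exact: conjc_real. Qed.

Definition vv (T : finType) (psi : cvec R T) (t : T) : CC := psi (enum_rank t) 0.
Definition colv (T : finType) (f : T -> CC) : cvec R T := \col_r f (enum_val r).
Lemma vv_colv (T : finType) (f : T -> CC) t : vv (colv f) t = f t.
Proof. by rewrite /vv /colv mxE enum_rankK. Qed.

Lemma big_ordT (V : Type) (idx : V) (op : Monoid.com_law idx) (T : finType)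
   (F : 'I_#|T| -> V) :
  \big[op/idx]_(r < #|T|) F r = \big[op/idx]_(t : T) F (enum_rank t).
Proof.
rewrite (reindex enum_rank) //; exists enum_val => x _; [exact: enum_rankK | exact: enum_valK].
Qed.

Lemma ent_mkmx (T : finType) (f : T -> T -> CC) x y : ent (mkmx f) x y = f x y.
Proof. by rewrite /ent /mkmx mxE !enum_rankK. Qed.

Lemma sqmx_ext (T : finType) (M N : sqmx R T) : (forall x y, ent M x y = ent N x y) -> M = N.
Proof.
move=> h; apply/matrixP => i j.
by have := h (enum_val i) (enum_val j); rewrite /ent !enum_valK.
Qed.

Lemma ent_ketbra (T : finType) (psi : cvec R T) x y :
  ent (ketbra psi) x y = vv psi x * Num.conj (vv psi y).
Proof. by rewrite /ent /ketbra mxE big_ord1 !mxE. Qed.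

Lemma ent_sum (T : finType) (I : finType) (M : I -> sqmx R T) x y :
  ent (\sum_i M i) x y = \sum_i ent (M i) x y.
Proof. by rewrite /ent summxE. Qed.

Lemma ent_scale (T : finType) (c : CC) (M : sqmx R T) x y : ent (c *: M) x y = c * ent M x y.
Proof. by rewrite /ent mxE. Qed.

Lemma unitP (T : finType) (psi : cvec R T) :
  (psi ^t* *m psi = 1%:M) <-> (\sum_t sq (vv psi t) = 1).
Proof.
have E : (psi ^t* *m psi) 0 0 = (\sum_t sq (vv psi t))%:C.
  rewrite mxE big_ordT rmorph_sum; apply: eq_bigr => t _.
  by rewrite !mxE /vv; exact: conjM_sq.
split.
  move=> h; apply: complexI; rewrite -E h mxE eqxx /=.
  by rewrite rmorph1.
move=> h; apply/matrixP => i j; rewrite !ord1 E h mxE eqxx //.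
Qed.

Lemma char_eig n (M : 'M[CC]_n) : char_poly M = \prod_(z <- eigvals M) ('X - z%:P).
Proof.
rewrite /eigvals; case: closed_field_poly_normal => r /=.
by rewrite (monicP (char_poly_monic M)) scale1r.
Qed.

Lemma xlnx0 : xlnx (0 : R) = 0.
Proof. by rewrite /xlnx eqxx. Qed.

Lemma prod_nseq0 m : \prod_(z <- nseq m (0 : CC)) ('X - z%:P) = 'X^m.
Proof.
elim: m => [|m IH]; first by rewrite big_nil expr0.
by rewrite /= big_cons IH subr0 exprS.
Qed.

Lemma vN_char n m n' (M : 'M[CC]_n) (s : seq CC) :
  'X^m * char_poly M = 'X^n' * \prod_(z <- s) ('X - z%:P) ->
  vN_entropy M = - \sum_(z <- s) xlnx (complex.Re z).
Proof.
rewrite char_eig -!prod_nseq0 -!big_cat => /prod_XsubC_eq pe.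
rewrite /vN_entropy; congr (- _).
have h : \sum_(z <- nseq m 0 ++ eigvals M) xlnx (complex.Re z) =
         \sum_(z <- nseq n' 0 ++ s) xlnx (complex.Re z) by apply: perm_big.
move: h; rewrite !big_cat /= => h.
have z0 k : \sum_(z <- nseq k (0 : CC)) xlnx (complex.Re z) = 0.
  by elim: k => [|k IH]; rewrite ?big_nil //= big_cons IH xlnx0 addr0.
by move: h; rewrite !z0 !add0r.
Qed.
End Basics.

Lemma sum_fst (V : nmodType) (X Y : finType) (x : X) (F : X * Y -> V) :
  \sum_(t : X * Y) (if t.1 == x then F t else 0) = \sum_y F (x, y).
Proof.
transitivity (\sum_a \sum_(y : Y) (if a == x then F (a, y) else 0)).
  by rewrite pair_bigA; apply: congr_big => // -[a y].
rewrite (bigD1 x) //= [X in _ + X]big1 ?addr0; first by apply: eq_bigr => y _; rewrite eqxx.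
by move=> a /negbTE ha; rewrite big1 // => y _; rewrite ha.
Qed.

Section Deph.
Variables (R : realType) (X Y : finType).
Local Notation CC := (R[i]).
Variable psi : cvec R (X * Y)%type.

Definition Wm : 'M[CC]_(#|{: X * Y}%type|, #|X|) :=
  \matrix_(r, s) if enum_rank (enum_val r).1 == s then psi r 0 else 0.

Lemma deph_WW : dephase (ketbra psi) = Wm *m Wm ^t*.
Proof.
apply/matrixP => i j; rewrite /dephase /mkmx !mxE ent_ketbra /vv !enum_valK.
rewrite (bigD1 (enum_rank (enum_val i).1)) //= !mxE eqxx big1 ?addr0; last first.
  by move=> s /negbTE; rewrite eq_sym !mxE => ->; rewrite mul0r.
rewrite (inj_eq enum_rank_inj) eq_sym.
by case: ifP => _ //; rewrite conjC0 mulr0.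
Qed.

Definition dq : 'rV[CC]_#|X| :=
  \row_s \sum_r (if enum_rank (enum_val r).1 == s then (sq (psi r 0))%:C else 0).

Lemma WW_diag : Wm ^t* *m Wm = diag_mx dq.
Proof.
apply/matrixP => s s'; rewrite !mxE.
case: (eqVneq s s') => [<-|ne]; rewrite ?mulr1n ?mulr0n.
  apply: eq_bigr => r _; rewrite !mxE.
  by case: ifP => _; rewrite ?conjC0 ?mul0r // conjM_sq.
apply: big1 => r _; rewrite !mxE.
case: ifP => /eqP e1; case: ifP => /eqP e2; rewrite ?conjC0 ?mulr0 ?mul0r //.
by move: ne; rewrite -e1 -e2 eqxx.
Qed.

Lemma entropy_dephase :
  vN_entropy (dephase (ketbra psi)) =
  - \sum_(x : X) xlnx (\sum_(y : Y) sq (vv psi (x, y))).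
Proof.
have h := sylvester Wm (Wm ^t*).
rewrite -deph_WW WW_diag (char_poly_trig (diag_mx_is_trig dq)) in h.
rewrite -big_enum /= -(big_map (fun i => diag_mx dq i i) xpredT (fun z => 'X - z%:P)) in h.
rewrite (vN_char h) big_map big_enum /= big_ordT; congr (- _).
apply: eq_bigr => x _; congr xlnx.
rewrite !mxE eqxx mulr1n raddf_sum /= big_ordT.
rewrite -(sum_fst x (fun t => sq (vv psi t))); apply: eq_bigr => t _.
rewrite /vv.
by rewrite enum_rankK (inj_eq enum_rank_inj); case: (t.1 == x).
Qed.
End Deph.
Section Shannon.
Variable R : realType.

Lemma xlnxE (t : R) : xlnx t = t * ln t.
Proof. by rewrite /xlnx; case: eqP => [->|//]; rewrite mul0r. Qed.

Lemma xlnx_le0 (t : R) : 0 <= t -> t <= 1 -> xlnx t <= 0.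
Proof. by move=> h0 h1; rewrite xlnxE mulr_ge0_le0 // ln_le0. Qed.

Lemma ln_le_sub1 (x : R) : 0 < x -> ln x <= x - 1.
Proof.
move=> x0; have := @le_ln1Dx R (x - 1).
by rewrite [1 + _]addrC subrK; apply; rewrite ltrBrDl subrr.
Qed.

Lemma chain1 (x y : R) : 0 <= x -> 0 < y -> y * xlnx (x / y) = xlnx x - x * ln y.
Proof.
move=> x0 y0; rewrite !xlnxE.
have [->|xp] := eqVneq x 0; first by rewrite !mul0r mulr0 subr0.
have xp' : 0 < x by rewrite lt_def xp x0.
rewrite ln_div ?posrE //.
rewrite mulrA mulrCA divff ?gt_eqF // mulr1 mulrBr //.
Qed.

Lemma gibbs (A B : finType) (q : A -> B -> R) :
  (forall a b, 0 <= q a b) -> \sum_a \sum_b q a b = 1 ->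
  \sum_a xlnx (\sum_b q a b) + \sum_b xlnx (\sum_a q a b) <=
  \sum_a \sum_b xlnx (q a b).
Proof.
move=> q0 q1.
set qa := fun a => \sum_b q a b.
set qb := fun b => \sum_a q a b.
have qa0 a : 0 <= qa a by apply: sumr_ge0.
have qb0 b : 0 <= qb b by apply: sumr_ge0.
have E1 : \sum_a xlnx (qa a) = \sum_a \sum_b q a b * ln (qa a).
  by apply: eq_bigr => a _; rewrite xlnxE /qa mulr_suml.
have E2 : \sum_b xlnx (qb b) = \sum_a \sum_b q a b * ln (qb b).
  rewrite exchange_big /=; apply: eq_bigr => b _; rewrite xlnxE /qb mulr_suml.
  by [].
have key a b : q a b * ln (qa a) + q a b * ln (qb b) - xlnx (q a b) <= qa a * qb b - q a b.
  have [->|qp] := eqVneq (q a b) 0.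
    by rewrite !mul0r xlnxE mul0r !subr0 addr0 mulr_ge0.
  have qp' : 0 < q a b by rewrite lt_def qp q0.
  have qap : 0 < qa a.
    by apply: lt_le_trans qp' _; rewrite /qa (bigD1 b) //= lerDl sumr_ge0.
  have qbp : 0 < qb b.
    by apply: lt_le_trans qp' _; rewrite /qb (bigD1 a) //= lerDl sumr_ge0.
  have h := ln_le_sub1 (divr_gt0 (mulr_gt0 qap qbp) qp').
  rewrite ln_div ?posrE ?mulr_gt0 // lnM ?posrE // in h.
  have := ler_wpM2l (ltW qp') h.
  rewrite xlnxE !mulrBr mulrDr mulr1 [q a b * (_ / _)]mulrC divfK //.
have sqb : \sum_b qb b = 1 by rewrite /qb exchange_big.
have S0 : \sum_a \sum_b (q a b * ln (qa a) + q a b * ln (qb b) - xlnx (q a b)) <= 0.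
  apply: le_trans (_ : \sum_a \sum_b (qa a * qb b - q a b) <= 0).
    by apply: ler_sum => a _; apply: ler_sum => b _; exact: key.
  rewrite big1 // => a _.
  by rewrite sumrB -mulr_sumr sqb mulr1 subrr.
rewrite E1 E2 -subr_le0; apply: le_trans S0; rewrite le_eqVlt; apply/orP; left; apply/eqP.
rewrite -big_split -sumrB; apply: eq_bigr => a _.
by rewrite -big_split -sumrB.
Qed.
End Shannon.

Lemma sum_pair (V : nmodType) (X Y : finType) (F : X * Y -> V) :
  \sum_(t : X * Y) F t = \sum_x \sum_y F (x, y).
Proof. by rewrite pair_bigA; apply: congr_big => // -[]. Qed.

Section Decomp.
Variable R : realType.
Local Notation CC := (R[i]).

Lemma sq_mulR (z : CC) (c : R) : sq (z * c%:C) = sq z * c ^+ 2.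
Proof. case: z => a b; rewrite /sq /=; simpc; rewrite /=; ring. Qed.
Lemma conj_mulR (z : CC) (c : R) : Num.conj (z * c%:C) = Num.conj z * c%:C.
Proof. by rewrite rmorphM /= conjC_R. Qed.
Lemma sq0 : sq (0 : CC) = 0. Proof. by rewrite /sq /= expr0n /= addr0. Qed.
Lemma sq1 : sq (1 : CC) = 1. Proof. by rewrite /sq /= expr1n expr0n /= addr0. Qed.

Lemma sum_sq0 (T : finType) (g : T -> CC) : \sum_t sq (g t) = 0 -> forall t, g t = 0.
Proof.
move=> h t; apply: sq_eq0; apply: (psumr_eq0P _ h) => // s _; exact: sq_ge0.
Qed.

Variables (X Y : finType).

Definition Sset (M : sqmx R (X * Y)%type) : set R :=
  [set s : R | exists (k : nat) (p : 'I_k -> R) (psi : 'I_k -> cvec R (X * Y)%type),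
         pure_decomp M p psi /\ s = \sum_i p i * vN_entropy (dephase (ketbra (psi i)))].
Lemma coh_formE M : coh_form M = inf (Sset M). Proof. by []. Qed.

Lemma in_S (I : finType) (M : sqmx R (X * Y)%type) (p : I -> R)
    (psi : I -> cvec R (X * Y)%type) :
  (forall i, 0 <= p i) -> \sum_i p i = 1 ->
  (forall i, \sum_t sq (vv (psi i) t) = 1) ->
  (forall u v, ent M u v = \sum_i (p i)%:C * (vv (psi i) u * Num.conj (vv (psi i) v))) ->
  Sset M (\sum_i p i * vN_entropy (dephase (ketbra (psi i)))).
Proof.
move=> p0 p1 pu pM.
exists #|I|, (fun j => p (enum_val j)), (fun j => psi (enum_val j)); split; last first.
  by rewrite big_ordT; apply: eq_bigr => i _; rewrite enum_rankK.
split => //.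
- by rewrite big_ordT -p1; apply: eq_bigr => i _; rewrite enum_rankK.
- by move=> j; apply/unitP.
- apply: sqmx_ext => u v; rewrite pM ent_sum big_ordT; apply: eq_bigr => i _.
  by rewrite enum_rankK ent_scale ent_ketbra.
Qed.

Lemma sqrt_inv2 (w : R) : 0 < w -> w * (Num.sqrt w)^-1 ^+ 2 = 1.
Proof. by move=> wp; rewrite exprVn sqr_sqrtr ?ltW // divff ?gt_eqF. Qed.

Lemma slice_decomp (I K : finType) (M : sqmx R (X * Y)%type) (p : I -> R)
    (f : I -> K -> (X * Y)%type -> CC) :
  (forall i, 0 <= p i) -> \sum_i p i = 1 ->
  (forall i, \sum_k \sum_t sq (f i k t) = 1) ->
  (forall u v, ent M u v = \sum_i (p i)%:C * \sum_k (f i k u * Num.conj (f i k v))) ->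
  Sset M (\sum_i p i * \sum_k (xlnx (\sum_t sq (f i k t)) -
                                \sum_x xlnx (\sum_y sq (f i k (x, y))))).
Proof.
move=> p0 p1 fu fM.
have [t0 _] : exists t0 : (X * Y)%type, True.
  case: (pickP (@predT I)) => [i0 _|hI]; last first.
    by move: p1; rewrite big_pred0 // => /eqP; rewrite eq_sym oner_eq0.
  case: (pickP (@predT (X * Y)%type)) => [t0 _|hT]; first by exists t0.
  have : \sum_k \sum_t sq (f i0 k t) = 0 by apply: big1 => k _; rewrite big_pred0.
  by rewrite fu => /eqP; rewrite oner_eq0.
pose w i k := \sum_t sq (f i k t).
have w0 i k : 0 <= w i k by apply: sumr_ge0 => t _; exact: sq_ge0.
pose e0 : cvec R (X * Y)%type := colv (fun t => if t == t0 then 1 else 0).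
pose c i k : R := (Num.sqrt (w i k))^-1.
pose psi (ik : (I * K)%type) : cvec R (X * Y)%type :=
  if 0 < w ik.1 ik.2 then colv (fun t => f ik.1 ik.2 t * (c ik.1 ik.2)%:C) else e0.
have fz i k : ~~ (0 < w i k) -> forall t, f i k t = 0.
  move=> h; apply: sum_sq0; apply/eqP; rewrite eq_le w0 andbT.
  by rewrite leNgt.
have wz i k : ~~ (0 < w i k) -> w i k = 0.
  by move=> h; apply/eqP; rewrite eq_le w0 andbT leNgt.
have P1 : forall ik : (I * K)%type, 0 <= p ik.1 * w ik.1 ik.2.
  by move=> ik; rewrite mulr_ge0.
have P2 : \sum_(ik : (I * K)%type) p ik.1 * w ik.1 ik.2 = 1.
  rewrite sum_pair -p1; apply: eq_bigr => i _ /=; rewrite -mulr_sumr.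
  by have -> : \sum_k w i k = 1 := fu i; rewrite mulr1.
have P3 : forall ik, \sum_t sq (vv (psi ik) t) = 1.
  move=> [i k]; rewrite /psi /=; case: ifP => wp.
    under eq_bigr => t _ do rewrite vv_colv sq_mulR.
    by rewrite -mulr_suml; exact: sqrt_inv2.
  rewrite (bigD1 t0) //= vv_colv eqxx sq1 big1 ?addr0 // => t /negbTE.
  by rewrite vv_colv => ->; exact: sq0.
have P4 : forall u v, ent M u v = \sum_ik (p ik.1 * w ik.1 ik.2)%:C *
                         (vv (psi ik) u * Num.conj (vv (psi ik) v)).
  move=> u v; rewrite fM sum_pair; apply: eq_bigr => i _; rewrite mulr_sumr.
  apply: eq_bigr => k _ /=; rewrite /psi /=; case: ifP => wp.
    rewrite !vv_colv conj_mulR rmorphM /=.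
    have hc : (w i k)%:C * (c i k)%:C * (c i k)%:C = 1 :> CC.
      by rewrite -!rmorphM /= -mulrA -expr2 sqrt_inv2.
    transitivity ((p i)%:C * (f i k u * Num.conj (f i k v)) *
                  ((w i k)%:C * (c i k)%:C * (c i k)%:C)).
      by rewrite hc mulr1.
    ring.
  rewrite (fz i k (negbT wp) u) (wz i k (negbT wp)) !mul0r mulr0.
  by rewrite mulr0 rmorph0 mul0r.
suff -> : \sum_i p i * \sum_k (xlnx (\sum_t sq (f i k t)) -
                                \sum_x xlnx (\sum_y sq (f i k (x, y)))) =
          \sum_(ik : (I * K)%type) p ik.1 * w ik.1 ik.2 *
              vN_entropy (dephase (ketbra (psi ik))).
  exact: in_S P1 P2 P3 P4.
rewrite sum_pair; apply: eq_bigr => i _; rewrite mulr_sumr.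
apply: eq_bigr => k _ /=; rewrite -mulrA; congr (_ * _).
case: (boolP (0 < w i k)) => wp; last first.
  have fz' := fz i k wp.
  have e1 : \sum_t sq (f i k t) = 0 by apply: big1 => t _; rewrite fz' sq0.
  have e2 : \sum_x xlnx (\sum_y sq (f i k (x, y))) = 0.
    by apply: big1 => x _; rewrite big1 ?xlnx0 // => y _; rewrite fz' sq0.
  by rewrite e1 e2 xlnx0 subr0 (wz i k wp) mul0r.
rewrite /psi /= wp entropy_dephase.
have hc2 : (c i k) ^+ 2 = (w i k)^-1.
  by rewrite exprVn sqr_sqrtr // ltW.
rewrite [X in _ = _ * - X](eq_bigr (fun x => xlnx ((\sum_y sq (f i k (x, y))) / w i k))); last first.
  move=> x _; congr xlnx; rewrite -hc2 mulr_suml; apply: eq_bigr => y _.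
  by rewrite vv_colv sq_mulR.
rewrite mulrN mulr_sumr.
rewrite [X in _ = - X](eq_bigr (fun x => xlnx (\sum_y sq (f i k (x, y))) -
                    (\sum_y sq (f i k (x, y))) * ln (w i k))); last first.
  by move=> x _; rewrite chain1 // sumr_ge0 // => y _; exact: sq_ge0.
rewrite sumrB -mulr_suml -(sum_pair (fun t => sq (f i k t))) -/(w i k) -xlnxE.
by rewrite opprB.
Qed.

Lemma Sset_ge0 M s : Sset M s -> 0 <= s.
Proof.
move=> [k [p [psi [[p0 p1 pu pM] ->]]]].
apply: sumr_ge0 => i _; apply: mulr_ge0 => //.
rewrite entropy_dephase oppr_ge0; apply: sumr_le0 => x _.
have hu := proj1 (unitP (psi i)) (pu i).
apply: xlnx_le0; first by apply: sumr_ge0 => y _; exact: sq_ge0.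
rewrite -hu sum_pair (bigD1 x) //= lerDl.
by apply: sumr_ge0 => x' _; apply: sumr_ge0 => y _; exact: sq_ge0.
Qed.
End Decomp.

Lemma inf_add (R : realType) (S S1 S2 : set R) : (exists s, S s) ->
  (forall s, S1 s -> 0 <= s) -> (forall s, S2 s -> 0 <= s) ->
  (forall s, S s -> exists s1 s2, [/\ S1 s1, S2 s2 & s1 + s2 <= s]) ->
  inf S1 + inf S2 <= inf S.
Proof.
move=> [s0 Ss0] h1 h2 h; apply: lb_le_inf; first by exists s0.
move=> s Ss; have [s1 [s2 [S1s S2s le]]] := h s Ss.
apply: le_trans le; apply: lerD.
  by apply: (ge_inf _) => //; exists 0 => y /h1.
by apply: (ge_inf _) => //; exists 0 => y /h2.
Qed.

Section Spec.
Variable R : realType.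
Local Notation CC := (R[i]).

Lemma trC_mul m n p (A : 'M[CC]_(m, n)) (B : 'M[CC]_(n, p)) :
  (A *m B) ^t* = B ^t* *m A ^t*.
Proof. by rewrite trmx_mul map_mxM. Qed.

Lemma trC_delta m n (i : 'I_m) (j : 'I_n) : (delta_mx i j : 'M[CC]_(m, n)) ^t* = delta_mx j i.
Proof. by apply/matrixP => a b; rewrite !mxE andbC; case: (_ && _); rewrite ?conjC0 ?conjC1. Qed.

Variables (X Y : finType).

Lemma density_S (M : sqmx R (X * Y)%type) : density M -> exists s, Sset M s.
Proof.
move=> [[herm psd] tr1].
have nm : M \is normalmx by apply/normalmxP; rewrite herm.
have /orthomx_spectralP eM := nm.
set P := spectralmx M in eM; set d := spectral_diag M in eM.
have Pu : P \is unitarymx := spectral_unitarymx M.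
rewrite invmx_unitary // in eM.
have PP : P *m P ^t* = 1%:M by apply/unitarymxP.
pose v i : cvec R (X * Y)%type := col i (P ^t*).
have vE i : v i = P ^t* *m delta_mx i 0 by rewrite /v colE.
have vtE i : (v i) ^t* = delta_mx 0 i *m P by rewrite vE trC_mul trC_delta trmxCK.
have vv1 i : (v i) ^t* *m v i = 1%:M.
  rewrite vtE vE mulmxA -(mulmxA _ P) PP mulmx1 mul_delta_mx.
  by apply/matrixP => a b; rewrite !ord1 !mxE.
have dge i : 0 <= d 0 i.
  have := psd (v i); rewrite eM vtE vE.
  rewrite !mulmxA -(mulmxA (delta_mx 0 i) P (P ^t*)) PP mulmx1.
  rewrite -(mulmxA (delta_mx 0 i *m diag_mx d) P (P ^t*)) PP mulmx1.
  by rewrite -rowE -colE !mxE eqxx mulr1n.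
have dR i : d 0 i = (complex.Re (d 0 i))%:C by apply: ge0_C.
have dRge i : 0 <= complex.Re (d 0 i) by rewrite -lecR -dR.
exists (\sum_i complex.Re (d 0 i) * vN_entropy (dephase (ketbra (v i)))).
apply: in_S => //.
- apply: complexI; rewrite rmorph_sum /=.
  rewrite (eq_bigr (fun i => d 0 i)); last by move=> i _; rewrite -dR.
  rewrite -mxtrace_diag -[RHS]tr1 eM mxtrace_mulC mulmxA PP mul1mx.
  by [].
- by move=> i; apply/unitP.
- move=> a b; rewrite /ent eM mxE.
  apply: eq_bigr => i _; rewrite mul_mx_diag !mxE /vv !mxE conjCK -dR.
  by rewrite mulrA [_ * d 0 i]mulrC.
Qed.
End Spec.

Lemma sum_unit (V : nmodType) (F : unit -> V) : \sum_(k : unit) F k = F tt.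
Proof. by rewrite (bigD1 tt) //= big_pred0 ?addr0 // => -[]. Qed.

Lemma sum3 (V : nmodType) (A B C : finType) (F : (A * B) * C -> V) :
  \sum_(t : (A * B) * C) F t = \sum_a \sum_b \sum_c F ((a, b), c).
Proof. by rewrite sum_pair sum_pair; apply: eq_bigr => a _; apply: eq_bigr => b _. Qed.

Lemma sum3' (V : nmodType) (A B C : finType) (F : A * (B * C) -> V) :
  \sum_(t : A * (B * C)) F t = \sum_a \sum_b \sum_c F (a, (b, c)).
Proof. by rewrite sum_pair; apply: eq_bigr => a _; rewrite sum_pair. Qed.

Section Arith.
Variable R : realType.
Lemma arith (I A B : finType) (p : I -> R) (q : I -> A -> B -> R) :
  (forall i, 0 <= p i) -> (forall i a b, 0 <= q i a b) ->
  (forall i, \sum_a \sum_b q i a b = 1) ->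
  (\sum_i p i * (- \sum_a xlnx (\sum_b q i a b))) +
  (\sum_i p i * \sum_a (xlnx (\sum_b q i a b) - \sum_b xlnx (q i a b))) =
  \sum_i p i * (- \sum_a \sum_b xlnx (q i a b)) /\
  (\sum_i p i * \sum_b (xlnx (\sum_a q i a b) - \sum_a xlnx (q i a b))) +
  (\sum_i p i * \sum_a (xlnx (\sum_b q i a b) - \sum_b xlnx (q i a b))) <=
  \sum_i p i * (- \sum_a \sum_b xlnx (q i a b)).
Proof.
move=> p0 q0 q1; split.
  rewrite -big_split; apply: eq_bigr => i _ /=; rewrite -mulrDr; congr (_ * _).
  by rewrite sumrB addrA addNr add0r.
rewrite -big_split; apply: ler_sum => i _ /=; rewrite -mulrDr; apply: ler_wpM2l => //.
have ex : \sum_b \sum_a xlnx (q i a b) = \sum_a \sum_b xlnx (q i a b) by rewrite exchange_big.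
rewrite !sumrB ex.
have := gibbs (q0 i) (q1 i).
set X1 := \sum_a xlnx _; set X2 := \sum_b xlnx _; set X3 := \sum_a \sum_b _.
move=> h; rewrite -subr_ge0.
have -> : - X3 - (X2 - X3 + (X1 - X3)) = X3 - (X1 + X2) by ring.
by rewrite subr_ge0.
Qed.
End Arith.

Section Main.
Variables (R : realType) (A B C : finType).
Local Notation CC := (R[i]).

Lemma key (rho : sqmx R ((A * B) * C)%type) s : Sset rho s ->
  exists s1 s2 s3, [/\ Sset (regroup rho) s1, Sset (ptrace_A rho) s2,
                       Sset (ptrace_B rho) s3, s1 + s2 = s & s3 + s2 <= s].
Proof.
move=> [k [p [psi [[p0 p1 pu pM] ->]]]].
have U i : \sum_t sq (vv (psi i) t) = 1 := proj1 (unitP _) (pu i).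
have E x y : ent rho x y = \sum_i (p i)%:C * (vv (psi i) x * Num.conj (vv (psi i) y)).
  by rewrite pM ent_sum; apply: eq_bigr => i _; rewrite ent_scale ent_ketbra.
pose q i a b := \sum_c sq (vv (psi i) ((a, b), c)).
have q0 i a b : 0 <= q i a b by apply: sumr_ge0 => c _; exact: sq_ge0.
have q1 i : \sum_a \sum_b q i a b = 1 by rewrite -(U i) sum3.
have [eq1 le1] := arith p0 q0 q1.
have hs : \sum_i p i * vN_entropy (dephase (ketbra (psi i))) =
          \sum_i p i * (- \sum_a \sum_b xlnx (q i a b)).
  by apply: eq_bigr => i _; rewrite entropy_dephase sum_pair.
rewrite hs.
have U1 i : \sum_(k0 : unit) \sum_(t : (A * (B * C))%type)
              sq (vv (psi i) ((t.1, t.2.1), t.2.2)) = 1.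
  by rewrite sum_unit sum3' -(U i) sum3.
have E1 u v : ent (regroup rho) u v = \sum_i (p i)%:C * \sum_(k0 : unit)
     (vv (psi i) ((u.1, u.2.1), u.2.2) * Num.conj (vv (psi i) ((v.1, v.2.1), v.2.2))).
  by rewrite /regroup ent_mkmx E; apply: eq_bigr => i _; rewrite sum_unit.
have S1 := slice_decomp (f := fun i _ t => vv (psi i) ((t.1, t.2.1), t.2.2)) p0 p1 U1 E1.
have U2 i : \sum_(a : A) \sum_(t : (B * C)%type) sq (vv (psi i) ((a, t.1), t.2)) = 1.
  by rewrite -(U i) sum3; apply: eq_bigr => a _; rewrite sum_pair.
have E2 u v : ent (ptrace_A rho) u v = \sum_i (p i)%:C * \sum_(a : A)
     (vv (psi i) ((a, u.1), u.2) * Num.conj (vv (psi i) ((a, v.1), v.2))).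
  rewrite /ptrace_A ent_mkmx; under eq_bigr do rewrite E.
  by rewrite exchange_big; apply: eq_bigr => i _; rewrite mulr_sumr.
have S2 := slice_decomp (f := fun i a t => vv (psi i) ((a, t.1), t.2)) p0 p1 U2 E2.
have U3 i : \sum_(b : B) \sum_(t : (A * C)%type) sq (vv (psi i) ((t.1, b), t.2)) = 1.
  rewrite -(U i) sum3 [RHS]exchange_big /=; apply: eq_bigr => b _; rewrite sum_pair.
  by [].
have E3 u v : ent (ptrace_B rho) u v = \sum_i (p i)%:C * \sum_(b : B)
     (vv (psi i) ((u.1, b), u.2) * Num.conj (vv (psi i) ((v.1, b), v.2))).
  rewrite /ptrace_B ent_mkmx; under eq_bigr do rewrite E.
  by rewrite exchange_big; apply: eq_bigr => i _; rewrite mulr_sumr.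
have S3 := slice_decomp (f := fun i b t => vv (psi i) ((t.1, b), t.2)) p0 p1 U3 E3.
simpl in S1, S2, S3.
have q1' i : \sum_a \sum_b \sum_c sq (vv (psi i) ((a, b), c)) = 1 := q1 i.
exists (\sum_i p i * (- \sum_a xlnx (\sum_b q i a b))),
  (\sum_i p i * \sum_a (xlnx (\sum_b q i a b) - \sum_b xlnx (q i a b))),
  (\sum_i p i * \sum_b (xlnx (\sum_a q i a b) - \sum_a xlnx (q i a b))).
split => //.
- apply: (eq_ind _ _ S1); apply: eq_bigr => i _; congr (_ * _).
  rewrite sum_unit sum3' /= q1' xlnxE mul1r ln1 sub0r; congr (- _).
  by apply: eq_bigr => a _; rewrite sum_pair.
- apply: (eq_ind _ _ S2); apply: eq_bigr => i _; congr (_ * _).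
  by apply: eq_bigr => a _; rewrite sum_pair.
- apply: (eq_ind _ _ S3); apply: eq_bigr => i _; congr (_ * _).
  apply: eq_bigr => b _; rewrite sum_pair /=.
  by [].
Qed.

Theorem proposition3' (rho : sqmx R ((A * B) * C)%type) :
  density rho ->
  coh_form (regroup rho) + coh_form (ptrace_A rho) <= coh_form rho /\
  coh_form (ptrace_B rho) + coh_form (ptrace_A rho) <= coh_form rho.
Proof.
move=> dens; have ne := density_S dens.
split; rewrite !coh_formE; apply: inf_add => //;
  try by move=> ? ?; apply: Sset_ge0; eassumption.
- move=> s /key [s1 [s2 [s3 [h1 h2 h3 e l]]]].
  by exists s1, s2; split => //; rewrite e.
- move=> s /key [s1 [s2 [s3 [h1 h2 h3 e l]]]].
  by exists s3, s2.
Qed.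
End Main.

End Helpers.

Theorem proposition3 (R : realType) (A B C : finType)
    (rho : sqmx R ((A * B) * C)%type) :
  density rho ->
  coh_form (regroup rho) + coh_form (ptrace_A rho) <= coh_form rho /\
  coh_form (ptrace_B rho) + coh_form (ptrace_A rho) <= coh_form rho.
Proof. exact: Helpers.proposition3'. Qed.
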